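(* Let $q\ge2$ and let $U$ be a $q\times q$ row-stochastic matrix with strictly positive entries. There is a constant $C_4$ independent of $n$ such that for all sufficiently large $n$: (i) if $\mathbf{t}_1,\mathbf{t}_2\in\mathcal{N}_{q,n}$ satisfy $\mathbf{t}_1=\mathbf{t}_2+\mathbf{e}_b-\mathbf{e}_a$ for some $a\ne b\in[1:q]$, then $d_{\mathrm{TV}}(W_{\mathbf{t}_1},W_{\mathbf{t}_2})\le\frac{C_4(\log n)^{(q-2)/2}}{\sqrt n}$; (ii) for any $\mathbf{t}_1,\mathbf{t}_2\in\mathcal{N}_{q,n}$, $d_{\mathrm{TV}}(W_{\mathbf{t}_1},W_{\mathbf{t}_2})\le\frac{C_4(\log n)^{(q-2)/2}}{\sqrt n}\,d_{\mathrm c}(\mathbf{t}_1,\mathbf{t}_2)$.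
   Context: $\mathcal{N}_{q,n}=\{\mathbf{t}\in\mathbb{Z}_{\ge0}^q:\sum t_i=n\}$ is the set of compositions of vectors in $[1:q]^n$ (composition of $\mathbf{x}$: $(N(1|\mathbf{x}),\dots,N(q|\mathbf{x}))$, $N(c|\mathbf{x})=|\{i:x_i=c\}|$). For $\mathbf{t}\in\mathcal{N}_{q,n}$, $W_{\mathbf{t}}$ is the distribution of the composition of the output of $n$ independent uses of the DMC $U$ when the input is any vector of composition $\mathbf{t}$ (the output distribution of the $q$-ary noisy composition channel for input point mass at $\mathbf{t}$). $\mathbf{e}_c$ is the $c$-th unit vector. $d_{\mathrm c}(\mathbf{t},\mathbf{t}')=\frac12\sum_i|t_i-t_i'|$; $d_{\mathrm{TV}}(P,Q)=\frac12\sum|P-Q|$. Logarithms base 2. *)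

(* Defs.v *)
From HB Require Import structures.
From mathcomp Require Import all_boot all_order all_algebra.
From mathcomp Require Import all_classical all_reals all_analysis.
Set Implicit Arguments. Unset Strict Implicit. Unset Printing Implicit Defensive.
Import Order.TTheory GRing.Theory Num.Theory.
Local Open Scope ring_scope.

(* Symbols [1:q] are 'I_q; vectors in [1:q]^n are {ffun 'I_n -> 'I_q}. *)

Definition comp (q n : nat) (x : {ffun 'I_n -> 'I_q}) : {ffun 'I_q -> nat} :=
  [ffun c => #|[set i | x i == c]|].

Definition inN (q n : nat) (t : {ffun 'I_q -> nat}) : bool :=
  (\sum_(c < q) t c)%N == n.

Definition comps (q n : nat) : seq {ffun 'I_q -> nat} :=
  undup [seq comp x | x <- enum {ffun 'I_n -> 'I_q}].

Definition evec (q : nat) (c : 'I_q) : {ffun 'I_q -> nat} :=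
  [ffun i => nat_of_bool (i == c)].
Definition addcomp (q : nat) (s t : {ffun 'I_q -> nat}) : {ffun 'I_q -> nat} :=
  [ffun i => (s i + t i)%N].

Definition pos_stochastic (R : realType) (q : nat) (U : 'M[R]_q) : Prop :=
  (forall a b, 0 < U a b) /\ (forall a, \sum_(b < q) U a b = 1).

(* Output-composition distribution for a given input vector x:
   P(comp(Y) = s) where Y_i ~ U(x_i, .) independently. *)
Definition Wx (R : realType) (q n : nat) (U : 'M[R]_q)
  (x : {ffun 'I_n -> 'I_q}) (s : {ffun 'I_q -> nat}) : R :=
  \sum_(y : {ffun 'I_n -> 'I_q} | comp y == s) \prod_(i < n) U (x i) (y i).

(* W_t: use some (chosen) input vector of composition t; the distribution does
   not depend on the choice.  If t is not a composition, the zero function. *)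
Definition W (R : realType) (q n : nat) (U : 'M[R]_q)
  (t : {ffun 'I_q -> nat}) (s : {ffun 'I_q -> nat}) : R :=
  match [pick x : {ffun 'I_n -> 'I_q} | comp x == t] with
  | Some x => Wx U x s
  | None => 0
  end.

Definition dTV (R : realType) (q n : nat) (U : 'M[R]_q)
  (t1 t2 : {ffun 'I_q -> nat}) : R :=
  2^-1 * \sum_(s <- comps q n) `|W n U t1 s - W n U t2 s|.

Definition dc (R : realType) (q : nat) (t1 t2 : {ffun 'I_q -> nat}) : R :=
  2^-1 * \sum_(i < q) `|(t1 i)%:R - (t2 i)%:R : R|.

Definition log2 (R : realType) (x : R) : R := ln x / ln 2.

Definition bnd (R : realType) (q n : nat) (C : R) : R :=
  C * (log2 (n%:R : R)) `^ (((q%:R : R) - 2) / 2) / Num.sqrt (n%:R).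

(* Main.v *)
Require Import Defs.
From HB Require Import structures.
From mathcomp Require Import all_boot all_order all_algebra.
From mathcomp Require Import all_classical all_reals all_analysis.
From mathcomp Require Import fingroup perm.
From mathcomp Require Import ring lra zify.
Import Order.TTheory GRing.Theory Num.Theory.
Local Open Scope ring_scope.
Set Implicit Arguments. Unset Strict Implicit. Unset Printing Implicit Defensive.

Section Meas.
Variables (R : realType) (q : nat).
Local Notation K := {ffun 'I_q -> nat}.
Definition meas := seq (R * K).
Implicit Types (M N P : meas) (k : K).
Definition dens M k : R := \sum_(p <- M) (p.2 == k)%:R * p.1.
Definition integ M (G : K -> R) : R := \sum_(p <- M) p.1 * G p.2.
Definition supp M := undup (map snd M).
Definition Lm M : R := \sum_(k <- supp M) `|dens M k|.
Definition norm1 M : R := \sum_(p <- M) `|p.1|.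
Definition mprod M N : meas := [seq (p.1 * r.1, addcomp p.2 r.2) | p <- M, r <- N].
Definition mscl (a : R) M : meas := [seq (a * p.1, p.2) | p <- M].
Definition eqm M N := forall k, dens M k = dens N k.

Lemma dens_notin M k : k \notin map snd M -> dens M k = 0.
Proof.
rewrite /dens; elim: M => [|p M IH]; first by rewrite big_nil.
rewrite /= in_cons negb_or big_cons => /andP[H1 H2].
by rewrite IH // eq_sym (negbTE H1) mul0r add0r.
Qed.

Lemma dens_in M k : dens M k != 0 -> k \in map snd M.
Proof. by apply: contraR => /dens_notin ->. Qed.

Lemma sum_supp (s1 s2 : seq K) (F : K -> R) : uniq s1 -> uniq s2 ->
  (forall k, F k != 0 -> k \in s1) -> (forall k, F k != 0 -> k \in s2) ->
  \sum_(k <- s1) F k = \sum_(k <- s2) F k.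
Proof.
move=> u1 u2 h1 h2.
have E s : \sum_(k <- s) F k = \sum_(k <- seq.filter (fun k => F k != 0) s) F k.
  rewrite big_filter [RHS]big_mkcond /=; apply: eq_bigr => k _.
  by case: eqP => // ->.
rewrite E (E s2); apply: perm_big; apply: uniq_perm; try exact: seq.filter_uniq.
move=> k; rewrite !mem_filter; case H: (F k != 0) => //=.
by rewrite (h1 _ H) (h2 _ H).
Qed.

Lemma L_sum M (s : seq K) : uniq s -> {subset map snd M <= s} ->
  Lm M = \sum_(k <- s) `|dens M k|.
Proof.
move=> us sub; apply: sum_supp => //; first exact: undup_uniq.
  by move=> k; rewrite normr_eq0 => /dens_in; rewrite mem_undup.
by move=> k; rewrite normr_eq0 => /dens_in /sub.
Qed.

Lemma L_eqm M N : eqm M N -> Lm M = Lm N.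
Proof.
move=> e; rewrite (@L_sum M (undup (map snd (M ++ N)))) ?undup_uniq //; last first.
  by move=> k; rewrite mem_undup map_cat mem_cat => ->.
rewrite (@L_sum N (undup (map snd (M ++ N)))) ?undup_uniq //; last first.
  by move=> k; rewrite mem_undup map_cat mem_cat orbC => ->.
by apply: eq_bigr => k _; rewrite e.
Qed.

Lemma L0 M : (forall k, dens M k = 0) -> Lm M = 0.
Proof. by move=> h; rewrite /Lm big1 // => k _; rewrite h normr0. Qed.

Lemma dens_cat M N k : dens (M ++ N) k = dens M k + dens N k.
Proof. by rewrite /dens big_cat. Qed.

Lemma dens_scale a M k : dens (mscl a M) k = a * dens M k.
Proof.
rewrite /dens /mscl big_map mulr_sumr; apply: eq_bigr => p _ /=.
by rewrite mulrCA.
Qed.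

Lemma L_cat M N : Lm (M ++ N) <= Lm M + Lm N.
Proof.
set s := undup (map snd (M ++ N)).
have us : uniq s by exact: undup_uniq.
have h1 : {subset map snd M <= s}.
  by move=> k; rewrite mem_undup map_cat mem_cat => ->.
have h2 : {subset map snd N <= s}.
  by move=> k; rewrite mem_undup map_cat mem_cat orbC => ->.
have h3 : {subset map snd (M ++ N) <= s} by move=> k; rewrite mem_undup.
rewrite (L_sum us h1) (L_sum us h2) (L_sum us h3).
rewrite -big_split /=; apply: ler_sum => k _; rewrite dens_cat.
exact: ler_normD.
Qed.

Lemma L_scale a M : Lm (mscl a M) = `|a| * Lm M.
Proof.
rewrite (@L_sum _ (supp M)) ?undup_uniq //; last first.
  by move=> k; rewrite mem_undup /mscl -map_comp.
rewrite /Lm mulr_sumr; apply: eq_bigr => k _.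
by rewrite dens_scale normrM.
Qed.

Lemma integ_sum M (s : seq K) G : uniq s -> {subset map snd M <= s} ->
  integ M G = \sum_(k <- s) dens M k * G k.
Proof.
move=> us sub; rewrite /dens.
under eq_bigr do rewrite mulr_suml.
rewrite exchange_big /integ /=.
apply: eq_big_seq => p pM.
have ps : p.2 \in s by apply: sub; apply: map_f.
rewrite (bigD1_seq p.2) //= eqxx mul1r big1 ?addr0 // => k kn.
by rewrite eq_sym (negbTE kn) !mul0r.
Qed.

Lemma integ_eqm M N G : eqm M N -> integ M G = integ N G.
Proof.
move=> e; rewrite (@integ_sum M (undup (map snd (M ++ N)))) ?undup_uniq //; last first.
  by move=> k; rewrite mem_undup map_cat mem_cat => ->.
rewrite (@integ_sum N (undup (map snd (M ++ N)))) ?undup_uniq //; last first.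
  by move=> k; rewrite mem_undup map_cat mem_cat orbC => ->.
by apply: eq_bigr => k _; rewrite e.
Qed.

Lemma dens_integ M k : dens M k = integ M (fun x => (x == k)%:R).
Proof. by apply: eq_bigr => p _; rewrite mulrC. Qed.

Lemma integ_prod M N G :
  integ (mprod M N) G = integ M (fun x => integ N (fun y => G (addcomp x y))).
Proof.
rewrite /integ /mprod big_allpairs_dep /=; apply: eq_bigr => p _.
by rewrite mulr_sumr; apply: eq_bigr => r _; rewrite mulrA.
Qed.

Lemma integ_ext M G1 G2 : (forall x, G1 x = G2 x) -> integ M G1 = integ M G2.
Proof. by move=> h; apply: eq_bigr => p _; rewrite h. Qed.

Lemma integ_cat M N G : integ (M ++ N) G = integ M G + integ N G.
Proof. by rewrite /integ big_cat. Qed.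

Lemma integ_scale a M G : integ (mscl a M) G = a * integ M G.
Proof. by rewrite /integ big_map mulr_sumr; apply: eq_bigr => p _; rewrite mulrA. Qed.

Lemma integC M N (G : K -> K -> R) :
  integ M (fun x => integ N (fun y => G x y)) = integ N (fun y => integ M (fun x => G x y)).
Proof.
rewrite /integ; under eq_bigr do rewrite mulr_sumr.
rewrite exchange_big; apply: eq_bigr => r _; rewrite mulr_sumr.
by apply: eq_bigr => p _; rewrite mulrCA.
Qed.

Lemma addcompC (x y : K) : addcomp x y = addcomp y x.
Proof. by apply/ffunP => i; rewrite !ffunE addnC. Qed.
Lemma addcompA (x y z : K) : addcomp (addcomp x y) z = addcomp x (addcomp y z).
Proof. by apply/ffunP => i; rewrite !ffunE addnA. Qed.
Lemma addcompI (x y z : K) : (addcomp x y == addcomp x z) = (y == z).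
Proof.
apply/eqP/eqP => [h|->] //; apply/ffunP => i.
by move/ffunP: h => /(_ i); rewrite !ffunE => /addnI.
Qed.

Lemma eqm_prod M M' N N' : eqm M M' -> eqm N N' -> eqm (mprod M N) (mprod M' N').
Proof.
move=> e1 e2 k; rewrite !dens_integ !integ_prod (integ_eqm _ e1).
by apply: integ_ext => x; apply: integ_eqm.
Qed.

Lemma mprodC M N : eqm (mprod M N) (mprod N M).
Proof.
move=> k; rewrite !dens_integ !integ_prod integC.
by apply: integ_ext => x; apply: integ_ext => y; rewrite addcompC.
Qed.

Lemma mprodA M N P : eqm (mprod (mprod M N) P) (mprod M (mprod N P)).
Proof.
move=> k; rewrite !dens_integ !integ_prod.
apply: integ_ext => x; rewrite integ_prod; apply: integ_ext => y.
by apply: integ_ext => z; rewrite addcompA.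
Qed.

Lemma mprod_catr M N1 N2 : eqm (mprod M (N1 ++ N2)) (mprod M N1 ++ mprod M N2).
Proof.
move=> k; rewrite dens_cat !dens_integ !integ_prod -big_split /=.
by apply: eq_bigr => p _; rewrite integ_cat mulrDr.
Qed.

Lemma mprod_scaler a M N : eqm (mprod M (mscl a N)) (mscl a (mprod M N)).
Proof.
move=> k; rewrite dens_scale !dens_integ !integ_prod; under integ_ext do rewrite integ_scale.
rewrite /integ mulr_sumr; apply: eq_bigr => p _; by rewrite mulrCA.
Qed.

Lemma eqm_refl M : eqm M M. Proof. by []. Qed.
Lemma eqm_sym M N : eqm M N -> eqm N M. Proof. by move=> h k; rewrite h. Qed.
Lemma eqm_trans M N P : eqm M N -> eqm N P -> eqm M P.
Proof. by move=> h1 h2 k; rewrite h1 h2. Qed.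
Lemma eqm_cat M M' N N' : eqm M M' -> eqm N N' -> eqm (M ++ N) (M' ++ N').
Proof. by move=> h1 h2 k; rewrite !dens_cat h1 h2. Qed.
Lemma eqm_scale a M M' : eqm M M' -> eqm (mscl a M) (mscl a M').
Proof. by move=> h k; rewrite !dens_scale h. Qed.

Definition shift (x : K) N : meas := [seq (r.1, addcomp x r.2) | r <- N].

Lemma L_shift x N : Lm (shift x N) = Lm N.
Proof.
have inj : injective (addcomp x) by move=> y z /eqP; rewrite addcompI => /eqP.
rewrite (@L_sum _ (map (addcomp x) (supp N))); first last.
- move=> k /mapP [r] /mapP [r' r'N ->] ->; apply: map_f.
  by rewrite mem_undup; apply: map_f.
- by rewrite map_inj_uniq // undup_uniq.
rewrite big_map; apply: eq_bigr => k _; congr `|_|.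
rewrite /dens /shift big_map; apply: eq_bigr => r _ /=.
by rewrite addcompI.
Qed.

Lemma norm1_ge0 M : 0 <= norm1 M.
Proof. by apply: sumr_ge0 => p _; exact: normr_ge0. Qed.

Lemma L_ge0 M : 0 <= Lm M.
Proof. by apply: sumr_ge0 => p _; exact: normr_ge0. Qed.

Lemma L_prod M N : Lm (mprod M N) <= norm1 M * Lm N.
Proof.
set S := supp (mprod M N).
have dE k : dens (mprod M N) k = \sum_(p <- M) p.1 * dens (shift p.2 N) k.
  rewrite dens_integ integ_prod; apply: eq_bigr => p _; congr (_ * _).
  rewrite /dens /shift big_map /integ; apply: eq_bigr => r _ /=.
  by rewrite mulrC.
rewrite /Lm -/S.
under eq_bigr do rewrite dE.
apply: le_trans (_ : \sum_(k <- S) \sum_(p <- M) `|p.1| * `|dens (shift p.2 N) k| <= _).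
  apply: ler_sum => k _; apply: le_trans (ler_norm_sum _ _ _) _.
  by apply: ler_sum => p _; rewrite normrM.
rewrite exchange_big /norm1 mulr_suml; rewrite [X in X <= _]big_seq [X in _ <= X]big_seq; apply: ler_sum => p pM.
rewrite -mulr_sumr; apply: ler_pM => //; first exact: sumr_ge0.
rewrite -[X in _ <= X]/(Lm N) -(L_shift p.2 N) (@L_sum (shift p.2 N) S) ?undup_uniq //.
move=> k /mapP [r] /mapP [r' r'N ->] ->; rewrite mem_undup.
apply/mapP; exists (p.1 * r'.1, addcomp p.2 r'.2) => //.
by apply/allpairsP; exists (p, r').
Qed.

End Meas.


Section MxSec.
Variables (R : realType) (q : nat) (U : 'M[R]_q).
Local Notation K := {ffun 'I_q -> nat}.

Definition Mx n (x : {ffun 'I_n -> 'I_q}) : meas R q :=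
  [seq (\prod_i U (x i) (y i), Defs.comp y) | y : {ffun 'I_n -> 'I_q} <- enum {ffun 'I_n -> 'I_q}].
Definition phi (a : 'I_q) : meas R q := [seq (U a c, evec c) | c <- enum 'I_q].

Definition ffcons n (c : 'I_q) (y : {ffun 'I_n -> 'I_q}) : {ffun 'I_n.+1 -> 'I_q} :=
  [ffun i => if unlift ord0 i is Some j then y j else c].
Definition ftail n (y : {ffun 'I_n.+1 -> 'I_q}) : {ffun 'I_n -> 'I_q} :=
  [ffun j => y (lift ord0 j)].

Lemma ffcons0 n c (y : {ffun 'I_n -> 'I_q}) : ffcons c y ord0 = c.
Proof. by rewrite ffunE unlift_none. Qed.
Lemma ffconsS n c (y : {ffun 'I_n -> 'I_q}) j : ffcons c y (lift ord0 j) = y j.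
Proof. by rewrite ffunE liftK. Qed.
Lemma ftail_cons n c (y : {ffun 'I_n -> 'I_q}) : ftail (ffcons c y) = y.
Proof. by apply/ffunP => j; rewrite ffunE ffconsS. Qed.
Lemma cons_tail n (y : {ffun 'I_n.+1 -> 'I_q}) : ffcons (y ord0) (ftail y) = y.
Proof.
apply/ffunP => i; rewrite ffunE; case: unliftP => [j ->|->] //.
by rewrite ffunE.
Qed.

Lemma card_sum n (P : pred 'I_n) : #|[set i | P i]| = (\sum_(i < n) P i)%N.
Proof.
by rewrite -sum1_card big_mkcond /=; apply: eq_bigr => i _; rewrite inE; case: (P i).
Qed.

Lemma comp_cons n c (y : {ffun 'I_n -> 'I_q}) :
  Defs.comp (ffcons c y) = addcomp (evec c) (Defs.comp y).
Proof.
apply/ffunP => e; rewrite !ffunE !card_sum big_ord_recl ffcons0 eq_sym.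
by congr (_ + _)%N; apply: eq_bigr => j _; rewrite ffconsS.
Qed.

Lemma dens_Mx n (x : {ffun 'I_n -> 'I_q}) s : dens (Mx x) s = Wx U x s.
Proof.
rewrite /dens /Mx big_map /Wx big_enum /= [RHS]big_mkcond /=.
by apply: eq_bigr => y _; case: eqP; rewrite ?mul1r ?mul0r.
Qed.

Lemma Mx_split n (x : {ffun 'I_n.+1 -> 'I_q}) :
  eqm (Mx x) (mprod (phi (x ord0)) (Mx (ftail x))).
Proof.
move=> s; rewrite dens_Mx dens_integ integ_prod /Wx big_mkcond /=.
rewrite (reindex (fun p : 'I_q * {ffun 'I_n -> 'I_q} => ffcons p.1 p.2)) /=; last first.
  exists (fun y : {ffun 'I_n.+1 -> 'I_q} => (y ord0, ftail y)) => [[c y] _|y _] /=.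
    by rewrite ffcons0 ftail_cons.
  exact: cons_tail.
rewrite -(pair_bigA _ (fun c y => if Defs.comp (ffcons c y) == s then
   \prod_(i < n.+1) U (x i) (ffcons c y i) else 0)) /=.
rewrite /integ /phi big_map big_enum /=; apply: eq_bigr => c _ /=.
rewrite /Mx big_map big_enum /= mulr_sumr; apply: eq_bigr => y _ /=.
rewrite comp_cons big_ord_recl ffcons0.
case: eqP => _; last by rewrite !mulr0.
by rewrite mulr1; congr (_ * _); apply: eq_bigr => i _; rewrite ffconsS ffunE.
Qed.

Lemma comp_perm n (y : {ffun 'I_n -> 'I_q}) (s : 'S_n) :
  Defs.comp [ffun i => y (s i)] = Defs.comp y.
Proof.
apply/ffunP => e; rewrite !ffunE.
have -> : [set i | [ffun i => y (s i)] i == e] = s @^-1: [set i | y i == e].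
  by apply/setP => i; rewrite !inE ffunE.
by rewrite card_preimset //; exact: perm_inj.
Qed.

Lemma Mx_perm n (x : {ffun 'I_n -> 'I_q}) (s : 'S_n) :
  eqm (Mx [ffun i => x (s i)]) (Mx x).
Proof.
move=> k; rewrite !dens_Mx /Wx.
have inj : injective (fun y : {ffun 'I_n -> 'I_q} => [ffun i => y (s i)]).
  move=> y1 y2 /ffunP h; apply/ffunP => i.
  by have := h ((s^-1)%g i); rewrite !ffunE permKV.
rewrite [LHS](reindex_inj inj) /=; apply: eq_big => y; first by rewrite comp_perm.
move=> _; rewrite [RHS](reindex_inj (@perm_inj _ s)) /=.
by apply: eq_bigr => i _; rewrite !ffunE.
Qed.

Lemma Mx_comp n (x x' : {ffun 'I_n -> 'I_q}) : Defs.comp x = Defs.comp x' -> eqm (Mx x) (Mx x').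
Proof.
elim: n x x' => [|n IH] x x' e.
  have -> : x = x' by apply/ffunP => -[].
  exact: eqm_refl.
set a := x ord0.
have : (0 < Defs.comp x' a)%N.
  rewrite -e ffunE card_gt0; apply/set0Pn; exists ord0; by rewrite inE.
rewrite ffunE card_gt0 => /set0Pn [j]; rewrite inE => /eqP xj.
set x'' := [ffun i => x' (tperm ord0 j i)].
apply: (eqm_trans _ (Mx_perm x' (tperm ord0 j))); rewrite -/x''.
have x''0 : x'' ord0 = a by rewrite ffunE tpermL.
have e2 : Defs.comp x = Defs.comp x'' by rewrite e comp_perm.
apply: eqm_trans (Mx_split x) _; apply: eqm_trans _ (eqm_sym (Mx_split x'')).
rewrite x''0; apply: eqm_prod; first exact: eqm_refl.
apply: IH; move: e2; rewrite -{1}(cons_tail x) -{1}(cons_tail x'') x''0 !comp_cons.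
by move/eqP; rewrite addcompI => /eqP.
Qed.

Lemma comp_exists (c0 : 'I_q) n (t : K) : inN n t -> exists x : {ffun 'I_n -> 'I_q}, Defs.comp x = t.
Proof.
elim: n t => [|n IH] t.
  rewrite /inN => /eqP h; exists [ffun=> c0]; apply/ffunP => e.
  rewrite ffunE card_sum big_ord0; apply/esym/eqP; rewrite -leqn0 -h.
  by rewrite (bigD1 e) //= leq_addr.
rewrite /inN => /eqP h.
have [c tc] : exists c, (0 < t c)%N.
  apply/existsP; apply: contraT; rewrite negb_exists => /forallP h0.
  by move: h; rewrite big1 // => i _; have := h0 i; rewrite lt0n negbK => /eqP.
set t' : K := [ffun e => t e - (e == c)]%N.
have tE : t = addcomp (evec c) t'.
  apply/ffunP => e; rewrite !ffunE; case: eqP => [->|_]; last by rewrite subn0.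
  by rewrite add1n subn1 prednK.
have : inN n t'.
  have hs : (\sum_(i < q) t i = 1 + \sum_(i < q) t' i)%N.
    rewrite {1}tE; under eq_bigr do rewrite ffunE; rewrite big_split /=.
    congr (_ + _)%N; rewrite (bigD1 c) //= big1 ?ffunE ?eqxx //.
    by move=> i /negbTE; rewrite ffunE => ->.
  by rewrite /inN; move: h; rewrite hs add1n => -[->].
move=> /IH [x' hx']; exists (ffcons c x'); by rewrite comp_cons hx' -tE.
Qed.

End MxSec.


Section Bin.
Variable R : realType.

Lemma cbin_evenR m : ('C(m.*2, m)%:R : R) ^+ 2 * (m.*2.+1)%:R <= 16%:R ^+ m.
Proof.
elim: m => [|m IH]; first by rewrite /= bin0 expr1n mul1r expr0.
have h1 := mul_bin_down m.*2.+1 m.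
have h2 := mul_bin_diag m.*2.+2 m.
rewrite /= in h1 h2.
have e1 : (m.*2.+1 - m = m.+1)%N by lia.
rewrite e1 in h1.
have -> : m.+1.*2 = m.*2.+2 by rewrite doubleS.
set A := 'C(m.*2, m) in IH h1 *; set B := 'C(m.*2.+1, m) in h1 h2.
set C := 'C(m.*2.+2, m.+1) in h2 *.
have eC : C = (2 * B)%N.
  apply/eqP; rewrite -(eqn_pmul2l (ltn0Sn m)) -h2 mulnA; apply/eqP.
  congr (_ * _)%N; lia.
have eB : (m.+1%:R * B%:R = m.*2.+1%:R * A%:R :> R) by rewrite -!natrM h1.
rewrite eC natrM.
set a := (A%:R : R) in IH eB *; set b := (B%:R : R) in eB *.
set x := (m%:R : R).
have ex1 : (m.*2.+1%:R : R) = 2 * x + 1 by rewrite -natr1 -addnn natrD; ring.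
have ex2 : (m.*2.+3%:R : R) = 2 * x + 3.
  by rewrite -!natr1 -addnn natrD; ring.
have ex3 : (m.+1%:R : R) = x + 1 by rewrite -natr1.
rewrite ex1 in IH eB; rewrite ex3 in eB; rewrite ex2.
have x0 : 0 <= x by exact: ler0n.
set Y := (16%:R : R) ^+ m in IH *.
have Xge0 : 0 <= a ^+ 2 * (2 * x + 1) by apply: mulr_ge0; [exact: sqr_ge0|lra].
have key : (x + 1) ^+ 2 * ((2%:R * b) ^+ 2 * (2 * x + 3)) <= (x + 1) ^+ 2 * (16%:R * Y).
  have -> : (x + 1) ^+ 2 * ((2%:R * b) ^+ 2 * (2 * x + 3)) = 4 * (2 * x + 3) * ((x + 1) * b) ^+ 2.
    by ring.
  rewrite eB.
  have -> : 4 * (2 * x + 3) * ((2 * x + 1) * a) ^+ 2 = (4 * (2 * x + 3) * (2 * x + 1)) * (a ^+ 2 * (2 * x + 1)).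
    by ring.
  apply: le_trans (_ : (4 * (2 * x + 3) * (2 * x + 1)) * Y <= _).
    by apply: ler_wpM2l => //; nra.
  have -> : (x + 1) ^+ 2 * (16%:R * Y) = (16 * (x + 1) ^+ 2) * Y by ring.
  apply: ler_wpM2r; first by apply: le_trans IH.
  nra.
have hp : 0 < (x + 1) ^+ 2 by apply: exprn_gt0; lra.
rewrite ler_pM2l // in key.
by rewrite [_ ^+ m.+1]exprS.
Qed.

Lemma cbinR j : ('C(j, j./2)%:R : R) ^+ 2 * (j.+1)%:R <= 4%:R ^+ j.
Proof.
case: (boolP (odd j)) => oj; last first.
  have -> : j = (j./2).*2 by rewrite -[in LHS](odd_double_half j) (negbTE oj).
  rewrite doubleK; set m := j./2.
  have -> : (4%:R : R) ^+ m.*2 = 16%:R ^+ m by rewrite -mul2n exprM expr2 -natrM.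
  exact: cbin_evenR.
have -> : j = (j./2).*2.+1 by rewrite -[in LHS](odd_double_half j) oj.
rewrite -[(_.*2.+1)./2]/(uphalf (j./2).*2) uphalf_double.
set m := j./2.
have h1 := mul_bin_down m.*2.+1 m; rewrite /= in h1.
have e1 : (m.*2.+1 - m = m.+1)%N by lia.
rewrite e1 in h1.
have IH := cbin_evenR m.
set A := 'C(m.*2, m) in IH h1; set B := 'C(m.*2.+1, m) in h1 *.
have eB : (m.+1%:R * B%:R = m.*2.+1%:R * A%:R :> R) by rewrite -!natrM h1.
set a := (A%:R : R) in IH eB *; set b := (B%:R : R) in eB *.
set x := (m%:R : R).
have ex1 : (m.*2.+1%:R : R) = 2 * x + 1 by rewrite -natr1 -addnn natrD; ring.
have ex2 : (m.*2.+2%:R : R) = 2 * x + 2.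
  by rewrite -!natr1 -addnn natrD; ring.
have ex3 : (m.+1%:R : R) = x + 1 by rewrite -natr1.
rewrite ex1 in IH eB; rewrite ex3 in eB; rewrite ex2.
have x0 : 0 <= x by exact: ler0n.
have -> : (4%:R : R) ^+ m.*2.+1 = 4%:R * 16%:R ^+ m.
  by rewrite exprS -mul2n exprM expr2 -natrM.
set Y := (16%:R : R) ^+ m in IH *.
have key : (x + 1) ^+ 2 * (b ^+ 2 * (2 * x + 2)) <= (x + 1) ^+ 2 * (4%:R * Y).
  have -> : (x + 1) ^+ 2 * (b ^+ 2 * (2 * x + 2)) = (2 * x + 2) * ((x + 1) * b) ^+ 2.
    by ring.
  rewrite eB.
  have -> : (2 * x + 2) * ((2 * x + 1) * a) ^+ 2 = ((2 * x + 2) * (2 * x + 1)) * (a ^+ 2 * (2 * x + 1)).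
    by ring.
  apply: le_trans (_ : ((2 * x + 2) * (2 * x + 1)) * Y <= _).
    by apply: ler_wpM2l => //; nra.
  have -> : (x + 1) ^+ 2 * (4%:R * Y) = (4 * (x + 1) ^+ 2) * Y by ring.
  apply: ler_wpM2r; first by apply: le_trans IH; apply: mulr_ge0; [exact: sqr_ge0|lra].
  nra.
have hp : 0 < (x + 1) ^+ 2 by apply: exprn_gt0; lra.
by rewrite ler_pM2l // in key.
Qed.

Lemma bin_mono_up j v : (v < j./2)%N -> ('C(j, v) <= 'C(j, v.+1))%N.
Proof.
move=> hv; have h := mul_bin_left j v.
have hj : (v.+1 <= j - v)%N by move: hv; rewrite -{1}(odd_double_half j); lia.
rewrite -(leq_pmul2l (ltn0Sn v)) h; apply: leq_mul => //.
Qed.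

Lemma bin_mono_down j v : (j./2 <= v)%N -> ('C(j, v.+1) <= 'C(j, v))%N.
Proof.
move=> hv; have h := mul_bin_left j v.
have hj : (j - v <= v.+1)%N by move: hv; rewrite -{1}(odd_double_half j); lia.
rewrite -(leq_pmul2l (ltn0Sn v)) h; apply: leq_mul => //.
Qed.


Definition bb (j : nat) : R := 'C(j, j./2)%:R / 2%:R ^+ j.

Lemma bb_ge0 j : 0 <= bb j.
Proof. by rewrite /bb divr_ge0 // exprn_ge0. Qed.

Lemma bb_sq j : bb j ^+ 2 <= (j.+1%:R)^-1.
Proof.
have h := cbinR j.
have p4 : (0 : R) < 4%:R ^+ j by apply: exprn_gt0.
have pj : (0 : R) < j.+1%:R by [].
rewrite /bb expr_div_n.
have e4 : (2%:R ^+ j) ^+ 2 = 4%:R ^+ j :> R by rewrite -exprM mulnC exprM expr2 -natrM.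
by rewrite e4 ler_pdivrMr // mulrC ler_pdivlMr.
Qed.

Lemma amgm (r b : R) : 0 < r -> 2 * b <= r * b ^+ 2 + r^-1.
Proof.
move=> r0.
have e : r * (r * b ^+ 2 + r^-1 - 2 * b) = (r * b - 1) ^+ 2.
  by field; rewrite gt_eqF.
have : 0 <= r * (r * b ^+ 2 + r^-1 - 2 * b) by rewrite e sqr_ge0.
by rewrite pmulr_rge0 // subr_ge0.
Qed.

Lemma binom_sum1 m (p : R) :
  \sum_(j < m.+1) 'C(m, j)%:R * p ^+ j * (1 - p) ^+ (m - j) = 1.
Proof.
have e := exprDn (1 - p) p m; rewrite subrK expr1n in e; rewrite [RHS]e.
by apply: eq_bigr => j _; rewrite -mulr_natl; ring.
Qed.

Lemma binom_sum_inv m (p : R) : 0 < p <= 1 ->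
  \sum_(j < m.+1) 'C(m, j)%:R * p ^+ j * (1 - p) ^+ (m - j) * (j.+1%:R)^-1
   <= ((m.+1)%:R * p)^-1.
Proof.
move=> /andP[p0 p1].
have mp : 0 < (m.+1)%:R * p by rewrite mulr_gt0.
rewrite -[X in _ <= X]mul1r ler_pdivlMr // mulr_suml.
have := exprDn (1 - p) p m.+1; rewrite subrK expr1n big_ord_recl /= => e.
rewrite [X in _ <= X]e -[X in X <= _]add0r; apply: lerD.
  by rewrite bin0 subn0 expr0 mulr1 mulr1n exprn_ge0 // subr_ge0.
rewrite le_eqVlt; apply/orP; left; apply/eqP; apply: eq_bigr => j _.
have hb := mul_bin_diag m.+1 j; rewrite /= in hb.
rewrite /bump /= add1n subSS.
have hj : (j.+1%:R : R) != 0 by [].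
rewrite -[_ *+ 'C(m.+1, j.+1)]mulr_natr.
have hbR : (j.+1%:R * 'C(m.+1, j.+1)%:R = m.+1%:R * 'C(m, j)%:R :> R) by rewrite -!natrM hb.
have -> : ('C(m.+1, j.+1)%:R : R) = m.+1%:R * 'C(m, j)%:R / j.+1%:R.
  by rewrite -hbR; field.
by rewrite exprS; field.
Qed.

Lemma sum_bound m (mu : R) : 0 < mu -> 2 * mu <= 1 ->
  \sum_(j < m.+1) 'C(m, j)%:R * mu ^+ j * (1 - 2 * mu) ^+ (m - j) * (2 * 'C(j, j./2)%:R)
   <= 2 / Num.sqrt ((m.+1)%:R * (2 * mu)).
Proof.
move=> mu0 mu1; set p := 2 * mu.
have p0 : 0 < p by rewrite /p; lra.
set r := Num.sqrt ((m.+1)%:R * p).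
have mp : 0 < (m.+1)%:R * p by rewrite mulr_gt0.
have r0 : 0 < r by rewrite sqrtr_gt0.
have rr : r * r = (m.+1)%:R * p by rewrite -expr2 sqr_sqrtr // ltW.
have E j : 'C(m, j)%:R * mu ^+ j * (1 - p) ^+ (m - j) * (2 * 'C(j, j./2)%:R)
    = ('C(m, j)%:R * p ^+ j * (1 - p) ^+ (m - j)) * (2 * bb j).
  rewrite /bb /p exprMn; field; apply: expf_neq0; by [].
under eq_bigr do rewrite E.
apply: le_trans (_ : \sum_(j < m.+1) ('C(m, j)%:R * p ^+ j * (1 - p) ^+ (m - j)) *
    (r * (j.+1%:R)^-1 + r^-1) <= _).
  apply: ler_sum => j _; apply: ler_wpM2l.
    by rewrite !mulr_ge0 // ?exprn_ge0 // ?subr_ge0 // ltW.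
  apply: le_trans (amgm (bb j) r0) _; rewrite lerD2r; apply: ler_wpM2l; first exact: ltW.
  exact: bb_sq.
under eq_bigr do rewrite mulrDr.
rewrite big_split /= -mulr_suml binom_sum1 mul1r.
under eq_bigr do rewrite mulrCA.
rewrite -mulr_sumr.
apply: le_trans (_ : r * ((m.+1)%:R * p)^-1 + r^-1 <= _).
  rewrite lerD2r; apply: ler_wpM2l; first exact: ltW.
  apply: binom_sum_inv; rewrite p0 /p; lra.
rewrite -rr invfM mulrA divff ?gt_eqF // mul1r; lra.
Qed.

End Bin.


Section Core.
Variables (R : realType) (q : nat) (U : 'M[R]_q).
Local Notation K := {ffun 'I_q -> nat}.
Local Notation meas := (meas R q).

Lemma dens_uniq (M : meas) p : uniq (map snd M) -> p \in M -> dens M p.2 = p.1.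
Proof.
elim: M => [|r M IH] //= /andP[rn u]; rewrite in_cons => /orP[/eqP->|pM].
  have := dens_notin rn; rewrite /dens big_cons eqxx mul1r => ->; by rewrite addr0.
have pn : r.2 != p.2.
  by apply: contraNneq rn => ->; apply: map_f.
by rewrite /dens big_cons (negbTE pn) mul0r add0r; exact: IH.
Qed.

Lemma L_uniq (M : meas) : uniq (map snd M) -> Lm M = \sum_(p <- M) `|p.1|.
Proof.
move=> u; rewrite /Lm /supp undup_id // big_map; apply: eq_big_seq => p pM.
by rewrite dens_uniq.
Qed.

Lemma sum_delta (F : 'I_q -> R) c : \sum_(e < q) F e * (e == c)%:R = F c.
Proof.
rewrite (bigD1 c) //= eqxx mulr1 big1 ?addr0 // => e /negbTE ->; by rewrite mulr0.
Qed.

Lemma sum_delta1 c : \sum_(e < q) ((e == c)%:R : R) = 1.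
Proof.
rewrite (bigD1 c) //= eqxx big1 ?addr0 // => e /negbTE ->; by [].
Qed.

Variables (c d : 'I_q) (mu : R).
Hypothesis cd : c != d.
Hypothesis mu0 : 0 < mu.
Hypothesis mu1 : 2 * mu <= 1.
Hypothesis muU : forall a e, mu <= U a e.
Hypothesis Usum : forall a, \sum_(e < q) U a e = 1.

Definition Bm : meas := [:: (1, evec c); (1, evec d)].
Definition iterB j (P : meas) := iter j (fun M => mprod M Bm) P.
Definition Qm a : meas :=
  [seq (U a e - mu * ((e == c)%:R + (e == d)%:R), evec e) | e <- enum 'I_q].

Lemma phi_split a : eqm (phi U a) (mscl mu Bm ++ Qm a).
Proof.
move=> k; rewrite dens_cat dens_scale /dens /phi /Qm !big_map !big_cons big_nil.
under [X in _ = _ + X]eq_bigr do rewrite mulrBr mulrDr mulrDr.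
rewrite sumrB big_split /=.
have h x : \sum_(i < q) (evec i == k)%:R * (mu * (i == x)%:R) = mu * (evec x == k)%:R.
  under eq_bigr do rewrite mulrCA.
  by rewrite -mulr_sumr (sum_delta (fun i => (evec i == k)%:R)).
rewrite !h; ring.
Qed.

Lemma Q_ge0 a e : 0 <= U a e - mu * ((e == c)%:R + (e == d)%:R).
Proof.
have := muU a e; case: eqP => [->|_]; case: eqP => [ed|_] /=.
- by move: cd; rewrite ed eqxx.
- by rewrite addr0 mulr1 subr_ge0.
- by rewrite add0r mulr1 subr_ge0.
- rewrite addr0 mulr0 subr0 => h; apply: le_trans h; exact: ltW.
Qed.

Lemma norm1_Q a : norm1 (Qm a) = 1 - 2 * mu.
Proof.
rewrite /norm1 /Qm big_map big_enum /=.
under eq_bigr do rewrite ger0_norm ?Q_ge0 //.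
rewrite sumrB Usum -mulr_sumr big_split /=.
rewrite !sum_delta1.
ring.
Qed.

Lemma iterB_eqm j P P' : eqm P P' -> eqm (iterB j P) (iterB j P').
Proof.
elim: j => [|j IH] //= h; apply: eqm_prod; [exact: IH | exact: eqm_refl].
Qed.

Lemma iterB_prod j P X : eqm (iterB j (mprod P X)) (mprod (iterB j P) X).
Proof.
elim: j => [|j IH] /=; first exact: eqm_refl.
apply: eqm_trans (eqm_prod IH (eqm_refl Bm)) _.
apply: eqm_trans (mprodA _ _ _) _.
apply: eqm_trans (eqm_prod (eqm_refl _) (mprodC _ _)) _.
exact: eqm_sym (mprodA _ _ _).
Qed.

Lemma L_step j P a :
  Lm (iterB j (mprod P (phi U a))) <= mu * Lm (iterB j.+1 P) + (1 - 2 * mu) * Lm (iterB j P).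
Proof.
rewrite (L_eqm (iterB_prod j P (phi U a))).
set Y := iterB j P.
have e : eqm (mprod Y (phi U a)) (mscl mu (mprod Y Bm) ++ mprod Y (Qm a)).
  apply: eqm_trans (eqm_prod (eqm_refl Y) (phi_split a)) _.
  apply: eqm_trans (mprod_catr _ _ _) _.
  apply: eqm_cat; [exact: mprod_scaler | exact: eqm_refl].
rewrite (L_eqm e); apply: le_trans (L_cat _ _) _.
rewrite L_scale ger0_norm; last exact: ltW.
apply: lerD => //.
rewrite (L_eqm (mprodC _ _)) -(norm1_Q a); exact: L_prod.
Qed.

Lemma Mx0 (z : {ffun 'I_0 -> 'I_q}) : eqm (Mx U z) [:: (1, [ffun=> 0%N])].
Proof.
move=> s; rewrite dens_Mx /Wx /dens big_cons big_nil mulr1 addr0.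
have allz (y : {ffun 'I_0 -> 'I_q}) : y = z by apply/ffunP => -[].
have compz (y : {ffun 'I_0 -> 'I_q}) : Defs.comp y = [ffun=> 0%N].
  by apply/ffunP => e; rewrite !ffunE card_sum big_ord0.
under eq_bigr do rewrite big_ord0.
have [<-|ne] := eqVneq ([ffun=> 0%N] : K) s.
  under eq_bigl do rewrite compz eqxx.
  by rewrite sumr_const card_ffun !card_ord expn0.
by rewrite big_pred0 // => y; rewrite compz (negbTE ne).
Qed.

Lemma claim m (z : {ffun 'I_m -> 'I_q}) (P : meas) :
  Lm (mprod P (Mx U z)) <=
  \sum_(j < m.+1) 'C(m, j)%:R * mu ^+ j * (1 - 2 * mu) ^+ (m - j) * Lm (iterB j P).
Proof.
elim: m z P => [|m IH] z P.
  rewrite big_ord1 /= bin0 expr0 !mul1r.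
  rewrite (L_eqm (eqm_prod (eqm_refl P) (Mx0 z))).
  rewrite le_eqVlt; apply/orP; left; apply/eqP; apply: L_eqm => k.
  rewrite !dens_integ integ_prod; apply: integ_ext => x.
  rewrite /integ big_cons big_nil mul1r addr0.
  by have -> : addcomp x [ffun=> 0%N] = x by apply/ffunP => i; rewrite !ffunE addn0.
have e : eqm (mprod P (Mx U z)) (mprod (mprod P (phi U (z ord0))) (Mx U (ftail z))).
  apply: eqm_trans (eqm_prod (eqm_refl P) (Mx_split U z)) _.
  exact: eqm_sym (mprodA _ _ _).
rewrite (L_eqm e); apply: le_trans (IH _ _) _.
set nu := 1 - 2 * mu.
have nu0 : 0 <= nu by rewrite /nu subr_ge0.
apply: le_trans (_ : \sum_(j < m.+1) 'C(m, j)%:R * mu ^+ j * nu ^+ (m - j) *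
   (mu * Lm (iterB j.+1 P) + nu * Lm (iterB j P)) <= _).
  apply: ler_sum => j _; apply: ler_wpM2l; last exact: L_step.
  by rewrite !mulr_ge0 ?exprn_ge0 // ltW.
rewrite le_eqVlt; apply/orP; left; apply/eqP.
have h1 : \sum_(j < m.+1) 'C(m, j)%:R * mu ^+ j * nu ^+ (m - j) * (mu * Lm (iterB j.+1 P) + nu * Lm (iterB j P))
  = \sum_(j < m.+1) 'C(m, j)%:R * mu ^+ j.+1 * nu ^+ (m - j) * Lm (iterB j.+1 P)
  + \sum_(j < m.+1) 'C(m, j)%:R * mu ^+ j * nu ^+ (m - j).+1 * Lm (iterB j P).
  rewrite -big_split /=; apply: eq_bigr => j _; rewrite !exprS; ring.
have h2 : \sum_(j < m.+1) 'C(m, j)%:R * mu ^+ j * nu ^+ (m - j).+1 * Lm (iterB j P)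
  = nu ^+ m.+1 * Lm P + \sum_(j < m.+1) 'C(m, j.+1)%:R * mu ^+ j.+1 * nu ^+ (m - j) * Lm (iterB j.+1 P).
  rewrite big_ord_recl /= bin0 subn0 expr0 !mul1r; congr (_ + _).
  rewrite [RHS]big_ord_recr /= bin_small // !mul0r addr0.
  apply: eq_bigr => j _; rewrite /bump /= add1n.
  by have -> : (m - j = (m - j.+1).+1)%N by rewrite subnSK.
have h3 : \sum_(j < m.+2) 'C(m.+1, j)%:R * mu ^+ j * nu ^+ (m.+1 - j) * Lm (iterB j P)
  = nu ^+ m.+1 * Lm P + (\sum_(j < m.+1) 'C(m, j)%:R * mu ^+ j.+1 * nu ^+ (m - j) * Lm (iterB j.+1 P)
    + \sum_(j < m.+1) 'C(m, j.+1)%:R * mu ^+ j.+1 * nu ^+ (m - j) * Lm (iterB j.+1 P)).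
  rewrite big_ord_recl /= bin0 subn0 expr0 !mul1r; congr (_ + _).
  rewrite -big_split /=; apply: eq_bigr => j _; rewrite /bump /= add1n binS subSS natrD; ring.
rewrite h1 h2 h3; ring.
Qed.

End Core.


Section Expl.
Variables (R : realType) (q : nat) (c d : 'I_q).
Hypothesis cd : c != d.
Local Notation K := {ffun 'I_q -> nat}.
Local Notation meas := (meas R q).

Definition comb (u v : nat) : K := [ffun i => if i == c then u else if i == d then v else 0%N].
Definition wt (j u : nat) : R := 'C(j.+1, u)%:R - 2 * 'C(j, u)%:R.
Definition Dj (j : nat) : meas := [seq (wt j u, comb u (j.+1 - u)) | u <- iota 0 j.+2].
Definition P0 : meas := [:: (1, evec c); (-1, evec d)].

Lemma dc_neq : (d == c) = false.
Proof. by apply/negbTE; rewrite eq_sym. Qed.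

Lemma comb_c u v : addcomp (comb u v) (evec c) = comb u.+1 v.
Proof.
apply/ffunP => i; rewrite !ffunE; case: (i == c) => /=.
  by rewrite addn1.
by rewrite addn0.
Qed.

Lemma comb_d u v : addcomp (comb u v) (evec d) = comb u v.+1.
Proof.
apply/ffunP => i; rewrite !ffunE; case: (i =P c) => [ic|_] /=.
  subst i; by rewrite eq_sym dc_neq addn0.
case: (i =P d) => [id|_]; [subst i|]; by rewrite ?eqxx ?addn1 ?addn0.
Qed.

Lemma comb_inj u v u' v' : (comb u v == comb u' v') = (u == u') && (v == v').
Proof.
apply/eqP/andP => [/ffunP h|[/eqP-> /eqP->]] //.
have := h c; have := h d; rewrite !ffunE eqxx dc_neq eqxx => -> ->; by [].
Qed.

Lemma evec_comb_c : evec c = comb 1 0.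
Proof. by apply/ffunP => i; rewrite !ffunE; case: eqP => //= _; case: eqP. Qed.
Lemma evec_comb_d : evec d = comb 0 1.
Proof.
apply/ffunP => i; rewrite !ffunE; case: (i =P c) => [ic|_].
  subst i; by rewrite eq_sym dc_neq.
by case: eqP.
Qed.

Lemma Dj_step j : eqm (mprod (Dj j) (Bm R c d)) (Dj j.+1).
Proof.
move=> k; rewrite !dens_integ integ_prod.
set F := fun u => ((comb u (j.+2 - u) == k)%:R : R).
have ii n : iota 0 n = index_iota 0 n by rewrite /index_iota subn0.
have L1 : integ (Dj j) (fun x => integ (Bm R c d) (fun y => (addcomp x y == k)%:R))
   = \sum_(0 <= u < j.+2) (wt j u * F u.+1 + wt j u * F u).
  rewrite /integ /Dj big_map ii; apply: eq_big_nat => u /andP[_ hu] /=.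
  rewrite /Bm !big_cons big_nil !mul1r addr0 comb_c comb_d mulrDr /F.
  by rewrite subSS -subSn.
have L2 : integ (Dj j.+1) (fun x => (x == k)%:R) = \sum_(0 <= u < j.+3) wt j.+1 u * F u.
  by rewrite /integ /Dj big_map ii.
rewrite L1 L2 big_split /=.
rewrite [RHS](big_nat_recl _ _ _ (leq0n _)).
have wS u : wt j.+1 u.+1 = wt j u + wt j u.+1 by rewrite /wt !binS !natrD; ring.
under [X in _ = _ + X]eq_bigr do rewrite wS mulrDl.
rewrite big_split /= [X in _ = X]addrCA; congr (_ + _).
rewrite (big_nat_recl _ _ _ (leq0n _)) [X in _ = _ + X](big_nat_recr _ _ _ (leq0n _)) /=.
have -> : wt j j.+2 = 0 by rewrite /wt !bin_small // mulr0 subr0.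
have -> : wt j.+1 0 = wt j 0 by rewrite /wt !bin0.
by rewrite mul0r addr0.
Qed.

Lemma iterB_Dj j : eqm (iterB c d j P0) (Dj j).
Proof.
elim: j => [|j IH] /=.
  move=> k; rewrite /dens /P0 /Dj /= !big_cons big_nil.
  rewrite /wt /= evec_comb_c evec_comb_d subn0 subnn !bin0 binn bin_small //; ring.
apply: eqm_trans (Dj_step j); apply: eqm_prod => //; exact: eqm_refl.
Qed.

Lemma L_Dj j : Lm (Dj j) = 2 * 'C(j, j./2)%:R.
Proof.
rewrite L_uniq; last first.
  rewrite /Dj -map_comp map_inj_in_uniq ?iota_uniq // => u v _ _ /= /eqP.
  by rewrite comb_inj => /andP[/eqP].
have ii : iota 0 j.+2 = index_iota 0 j.+2 by rewrite /index_iota subn0.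
rewrite /Dj big_map ii (big_nat_recl _ _ _ (leq0n _)) /=.
have -> : wt j 0 = -1 by rewrite /wt !bin0; ring.
have E v : `|wt j v.+1| = `|('C(j, v.+1)%:R : R) - 'C(j, v)%:R|.
  by rewrite /wt binS natrD distrC; congr `|_|; ring.
under eq_bigr do rewrite E.
have hh : (j./2 <= j.+1)%N by rewrite -{2}(odd_double_half j); lia.
rewrite (@big_cat_nat _ _ _ j./2) //=.
rewrite (@telescope_sumr_eq _ 0 j./2 (fun v => 'C(j, v)%:R)) ?leq0n //; last first.
  move=> v /andP[_ hv]; rewrite ger0_norm // subr_ge0 ler_nat; exact: bin_mono_up.
rewrite (@telescope_sumr_eq _ j./2 j.+1 (fun v => - ('C(j, v)%:R : R))) //; last first.
  move=> v /andP[hv _]; rewrite ler0_norm ?subr_le0 ?ler_nat; [ring | exact: bin_mono_down].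
rewrite bin0 (bin_small (ltnSn j)) normrN normr1 mulr0n; ring.
Qed.

End Expl.


Section Final.
Variables (R : realType) (q : nat) (U : 'M[R]_q) (mu : R).
Hypothesis mu0 : 0 < mu.
Hypothesis mu1 : 2 * mu <= 1.
Hypothesis muU : forall a e, mu <= U a e.
Hypothesis Usum : forall a, \sum_(e < q) U a e = 1.
Local Notation K := {ffun 'I_q -> nat}.
Local Notation meas := (meas R q).

Lemma core_bound (c d : 'I_q) m (z : {ffun 'I_m -> 'I_q}) : c != d ->
  Lm (mprod (P0 R c d) (Mx U z)) <= 2 / Num.sqrt (m.+1%:R * (2 * mu)).
Proof.
move=> cd; apply: le_trans (claim cd mu0 mu1 muU Usum z (P0 R c d)) _.
have E j : Lm (iterB c d j (P0 R c d)) = 2 * 'C(j, j./2)%:R.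
  by rewrite (L_eqm (iterB_Dj R cd j)) L_Dj.
under eq_bigr do rewrite E.
exact: sum_bound.
Qed.

Lemma P0_same (a : 'I_q) m (z : {ffun 'I_m -> 'I_q}) : Lm (mprod (P0 R a a) (Mx U z)) = 0.
Proof.
have e : eqm (P0 R a a) [::].
  by move=> k; rewrite /dens /P0 !big_cons !big_nil /=; ring.
rewrite (L_eqm (eqm_prod e (eqm_refl _))) /mprod /=; by rewrite /Lm /supp big_nil.
Qed.

Lemma mprod_catl (M1 M2 N : meas) : mprod (M1 ++ M2) N = mprod M1 N ++ mprod M2 N.
Proof. by rewrite /mprod allpairs_cat. Qed.

Lemma mprod_scalel a (M N : meas) : eqm (mprod (mscl a M) N) (mscl a (mprod M N)).
Proof.
apply: eqm_trans (mprodC _ _) _; apply: eqm_trans (mprod_scaler _ _ _) _.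
apply: eqm_scale; exact: mprodC.
Qed.

Definition Dm (a b : 'I_q) : meas :=
  flatten [seq mscl (U b e - U a e) (P0 R e a) | e <- enum 'I_q].

Lemma L_flat (s : seq 'I_q) (f : 'I_q -> R) (g : 'I_q -> meas) (N : meas) :
  Lm (mprod (flatten [seq mscl (f e) (g e) | e <- s]) N) <= \sum_(e <- s) `|f e| * Lm (mprod (g e) N).
Proof.
elim: s => [|e s IH] /=; first by rewrite big_nil /mprod /= /Lm /supp /= big_nil.
rewrite big_cons mprod_catl; apply: le_trans (L_cat _ _) _; apply: lerD => //.
by rewrite (L_eqm (mprod_scalel _ _ _)) L_scale.
Qed.

Lemma Dm_eqm (a b : 'I_q) : eqm (Dm a b) (phi U b ++ mscl (-1) (phi U a)).
Proof.
move=> k; rewrite dens_cat dens_scale /Dm.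
have -> : forall s : seq 'I_q, dens (flatten [seq mscl (U b e - U a e) (P0 R e a) | e <- s]) k
    = \sum_(e <- s) (U b e - U a e) * ((evec e == k)%:R - (evec a == k)%:R).
  elim=> [|e s IH] /=; first by rewrite big_nil /dens big_nil.
  by rewrite /dens !big_cons -/(dens _ k) IH /=; ring.
rewrite big_enum /=.
have hp x : dens (phi U x) k = \sum_(e < q) (evec e == k)%:R * U x e.
  by rewrite /dens /phi big_map big_enum.
rewrite !hp.
under eq_bigr do rewrite mulrBr.
rewrite sumrB -mulr_suml sumrB !Usum subrr mul0r subr0.
rewrite mulN1r -sumrB; apply: eq_bigr => e _; ring.
Qed.

End Final.


Section Final2.
Variables (R : realType) (q : nat) (U : 'M[R]_q) (mu : R).
Hypothesis mu0 : 0 < mu.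
Hypothesis mu1 : 2 * mu <= 1.
Hypothesis muU : forall a e, mu <= U a e.
Hypothesis Usum : forall a, \sum_(e < q) U a e = 1.
Local Notation K := {ffun 'I_q -> nat}.
Local Notation meas := (meas R q).

Lemma W_eq n (t : K) (c0 : 'I_q) : inN n t ->
  exists x : {ffun 'I_n -> 'I_q}, Defs.comp x = t /\ forall s, W n U t s = Wx U x s.
Proof.
move=> h; rewrite /W; case: pickP => [x /eqP hx | none].
  by exists x; split.
have [x hx] := comp_exists c0 h; by have := none x; rewrite hx eqxx.
Qed.

Lemma dTV_L n (t1 t2 : K) (x1 x2 : {ffun 'I_n -> 'I_q}) :
  (forall s, W n U t1 s = Wx U x1 s) -> (forall s, W n U t2 s = Wx U x2 s) ->
  dTV n U t1 t2 = 2^-1 * Lm (Mx U x1 ++ mscl (-1) (Mx U x2)).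
Proof.
move=> h1 h2; rewrite /dTV (@L_sum _ _ _ (comps q n)); first last.
- move=> k; rewrite map_cat mem_cat /mscl -map_comp /comps mem_undup.
  by rewrite /Mx -!map_comp; case/orP.
- exact: undup_uniq.
congr (_ * _); apply: eq_bigr => s _.
by rewrite dens_cat dens_scale !dens_Mx h1 h2 mulN1r.
Qed.

Lemma part_i n (t1 t2 : K) a b : (0 < n)%N -> inN n t1 -> inN n t2 -> a != b ->
  addcomp t1 (evec a) = addcomp t2 (evec b) ->
  dTV n U t1 t2 <= 2 / Num.sqrt (n%:R * (2 * mu)).
Proof.
case: n => // m _ h1 h2 ab e.
have [x1 [cx1 hx1]] := W_eq a h1.
have [x2 [cx2 hx2]] := W_eq a h2.
have ba : (b == a) = false by apply/negbTE; rewrite eq_sym.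
have tb : (0 < t1 b)%N.
  by move/ffunP: e => /(_ b); rewrite !ffunE eqxx ba addn0 addn1 => ->.
set t' : K := [ffun i => t1 i - (i == b)]%N.
have t1E : t1 = addcomp (evec b) t'.
  apply/ffunP => i; rewrite !ffunE; case: (i =P b) => [ib|_]; last by rewrite subn0.
  by subst i; rewrite add1n subn1 prednK.
have key (i : 'I_q) : (t1 i + (i == a) = t2 i + (i == b))%N ->
    t2 i = ((i == a) + (t1 i - (i == b)))%N.
  case: (boolP (i == b)) => [/eqP ib|nb]; first by subst i; rewrite ba; lia.
  by rewrite subn0; lia.
have t2E : t2 = addcomp (evec a) t'.
  apply/ffunP => i; move/ffunP: e => /(_ i); rewrite !ffunE; exact: key.
have ht' : inN m t'.
  move: h1; rewrite /inN t1E; under eq_bigr do rewrite ffunE; rewrite big_split /=.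
  have s1 : (\sum_(i < q) evec b i = 1)%N.
    rewrite (bigD1 b) //= ffunE eqxx big1 // => i ib; rewrite ffunE; by case: eqP ib => // ->; rewrite eqxx.
  by rewrite s1 add1n eqSS.
have [z hz] := comp_exists a ht'.
set xb := ffcons b z; set xa := ffcons a z.
have cb : Defs.comp x1 = Defs.comp xb by rewrite comp_cons hz -t1E.
have ca : Defs.comp x2 = Defs.comp xa by rewrite comp_cons hz -t2E.
rewrite (dTV_L hx1 hx2).
have E : eqm (Mx U x1 ++ mscl (-1) (Mx U x2)) (mprod (Dm U a b) (Mx U z)).
  apply: (eqm_trans _ (eqm_prod (eqm_sym (Dm_eqm Usum a b)) (eqm_refl _))).
  rewrite mprod_catl; apply: eqm_cat.
    apply: eqm_trans (Mx_comp U cb) _; apply: eqm_trans (Mx_split U xb) _.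
    by rewrite /xb ffcons0 ftail_cons; exact: eqm_refl.
  apply: eqm_trans _ (eqm_sym (mprod_scalel _ _ _)); apply: eqm_scale.
  apply: eqm_trans (Mx_comp U ca) _; apply: eqm_trans (Mx_split U xa) _.
  by rewrite /xa ffcons0 ftail_cons; exact: eqm_refl.
rewrite (L_eqm E).
set bd := 2 / Num.sqrt (m.+1%:R * (2 * mu)).
have bd0 : 0 <= bd by rewrite /bd divr_ge0 // sqrtr_ge0.
apply: le_trans (_ : 2^-1 * (2 * bd) <= _); last by rewrite mulrA mulVf ?mul1r.
apply: ler_wpM2l => //.
apply: le_trans (L_flat _ _ _ _) _.
apply: le_trans (_ : \sum_(e <- enum 'I_q) `|U b e - U a e| * bd <= _).
  apply: ler_sum => f _; apply: ler_wpM2l => //.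
  case: (eqVneq f a) => [->|fa]; first by rewrite P0_same.
  exact: core_bound.
rewrite -mulr_suml ler_wpM2r // big_enum /=.
apply: le_trans (_ : \sum_(e < q) (U b e + U a e) <= _).
  apply: ler_sum => f _; apply: le_trans (ler_normB _ _) _.
  by rewrite !ger0_norm // (le_trans (ltW mu0)).
by rewrite big_split /= !Usum.
Qed.

End Final2.


Lemma ex_mu (R : realType) q (U : 'M[R]_q) : (forall a b, 0 < U a b) ->
  exists mu : R, [/\ 0 < mu, 2 * mu <= 1 & forall a e, mu <= U a e].
Proof.
move=> pos.
suff [m [m0 m1 mh]] : exists m : R, [/\ 0 < m, 2 * m <= 1 &
    forall p, p \in enum {: 'I_q * 'I_q} -> m <= U p.1 p.2].
  by exists m; split => // a e; apply: (mh (a, e)); rewrite mem_enum.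
elim: (enum _) => [|p s [m [m0 m1 mh]]].
  by exists 2^-1; split; [rewrite invr_gt0 | rewrite mulfV | ].
exists (Order.min m (U p.1 p.2)); split.
- by rewrite lt_min m0 pos.
- apply: le_trans m1; rewrite ler_pM2l //; by rewrite ge_min lexx.
- move=> p'; rewrite in_cons => /orP[/eqP->|ps]; first by rewrite ge_min lexx orbT.
  by rewrite ge_min mh.
Qed.

Section Top.
Variables (R : realType) (q : nat) (U : 'M[R]_q).
Local Notation K := {ffun 'I_q -> nat}.

Lemma dTV_tri n (t1 t2 t3 : K) : dTV n U t1 t2 <= dTV n U t1 t3 + dTV n U t3 t2.
Proof.
rewrite /dTV -mulrDr ler_wpM2l // -big_split /=; apply: ler_sum => s _.
have -> : W n U t1 s - W n U t2 s = (W n U t1 s - W n U t3 s) + (W n U t3 s - W n U t2 s) by ring.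
exact: ler_normD.
Qed.

Lemma dTV_sym n (t1 t2 : K) : dTV n U t1 t2 = dTV n U t2 t1.
Proof. by rewrite /dTV; congr (_ * _); apply: eq_bigr => s _; rewrite distrC. Qed.

Lemma dTV_same n (t : K) : dTV n U t t = 0.
Proof. by rewrite /dTV big1 ?mulr0 // => s _; rewrite subrr normr0. Qed.

Definition Dn (t1 t2 : K) := (\sum_(i < q) (t1 i - t2 i))%N.

Lemma Dn_sym n (t1 t2 : K) : inN n t1 -> inN n t2 -> Dn t1 t2 = Dn t2 t1.
Proof.
rewrite /inN /Dn => /eqP h1 /eqP h2.
have e1 : (\sum_(i < q) t1 i = \sum_(i < q) (t1 i - t2 i) + \sum_(i < q) minn (t1 i) (t2 i))%N.
  by rewrite -big_split; apply: eq_bigr => i _ /=; lia.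
have e2 : (\sum_(i < q) t2 i = \sum_(i < q) (t2 i - t1 i) + \sum_(i < q) minn (t1 i) (t2 i))%N.
  by rewrite -big_split; apply: eq_bigr => i _ /=; lia.
by apply/eqP; rewrite -(eqn_add2r (\sum_(i < q) minn (t1 i) (t2 i))) -e1 -e2 h1 h2.
Qed.

Lemma dc_Dn n (t1 t2 : K) : inN n t1 -> inN n t2 -> dc R t1 t2 = (Dn t1 t2)%:R.
Proof.
move=> h1 h2; rewrite /dc.
have E (x y : nat) : `|x%:R - y%:R : R| = ((x - y)%N)%:R + ((y - x)%N)%:R.
  case: (leqP y x) => h.
    have -> : (y - x = 0)%N by lia.
    by rewrite addr0 natrB // ger0_norm // subr_ge0 ler_nat.
  have -> : (x - y = 0)%N by lia.
  by rewrite add0r natrB ?(ltnW h) // distrC ger0_norm // subr_ge0 ler_nat ltnW.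
under eq_bigr do rewrite E.
rewrite big_split /= -!natr_sum.
rewrite -/(Dn t1 t2) -/(Dn t2 t1) (Dn_sym h2 h1).
lra.
Qed.

Lemma sum_ev (b : 'I_q) : (\sum_(i < q) (i == b) = 1)%N.
Proof.
rewrite (bigD1 b) //= eqxx big1 // => i ib; by case: eqP ib => // ->; rewrite eqxx.
Qed.

Lemma part_ii n (t2 : K) (B : R) : 0 <= B ->
  (forall (t1 t2 : K) (a b : 'I_q), inN n t1 -> inN n t2 -> a != b ->
        addcomp t1 (evec a) = addcomp t2 (evec b) -> dTV n U t1 t2 <= B) ->
  inN n t2 -> forall k (t1 : K), Dn t1 t2 = k -> inN n t1 -> dTV n U t1 t2 <= B * k%:R.
Proof.
move=> B0 hi h2; elim=> [|k IH] t1 hD h1.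
  have t12 : t1 = t2.
    have z1 := hD; have z2 : Dn t2 t1 = 0%N by rewrite -(Dn_sym h1 h2).
    suff pt (i : 'I_q) : t1 i = t2 i by apply/ffunP => i; exact: pt.
    have a1 : (t1 i - t2 i = 0)%N.
      by move: z1; rewrite /Dn => /eqP; rewrite sum_nat_eq0 => /forallP /(_ i) /eqP.
    have a2 : (t2 i - t1 i = 0)%N.
      by move: z2; rewrite /Dn => /eqP; rewrite sum_nat_eq0 => /forallP /(_ i) /eqP.
    lia.
  by rewrite t12 dTV_same mulr0.
have [a ha] : exists a, (t2 a < t1 a)%N.
  apply/existsP; apply: contraT; rewrite negb_exists => /forallP hn.
  move: hD; rewrite /Dn big1 // => i _; have := hn i; rewrite -leqNgt; lia.
have [b hb] : exists b, (t1 b < t2 b)%N.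
  apply/existsP; apply: contraT; rewrite negb_exists => /forallP hn.
  move: hD; rewrite (Dn_sym h1 h2) /Dn big1 // => i _; have := hn i; rewrite -leqNgt; lia.
have ab : a != b by apply/eqP => eab; subst b; lia.
set t1' : K := [ffun i => t1 i - (i == a) + (i == b)]%N.
have p1 (i : 'I_q) : (t1 i - (i == a) + (i == a) = t1 i)%N.
  case: (boolP (i == a)) => [/eqP ia|_] /=; last by lia.
  subst i; lia.
have h1' : inN n t1'.
  rewrite /inN.
  have -> : (\sum_(i < q) t1' i = \sum_(i < q) t1 i)%N.
    transitivity (\sum_(i < q) ((t1 i - (i == a)) + (i == b)))%N.
      by apply: eq_bigr => i _; rewrite ffunE.
    rewrite big_split /= sum_ev -(sum_ev a) -big_split /=.
    by apply: eq_bigr => i _; exact: p1.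
  exact: h1.
have hD' : Dn t1' t2 = k.
  have pt (i : 'I_q) : (t1' i - t2 i + (i == a) = t1 i - t2 i)%N.
    rewrite ffunE; case: (boolP (i == a)) => [/eqP ia|na].
      subst i; have -> : (a == b) = false by apply/negbTE.
      lia.
    case: (boolP (i == b)) => [/eqP ib|nb]; last by lia.
    subst i; lia.
  apply/eqP; rewrite -eqSS -[k.+1]hD /Dn -addn1 -(sum_ev a) -big_split /=.
  by apply/eqP; apply: eq_bigr => i _; rewrite pt.
have step : dTV n U t1 t1' <= B.
  apply: (hi t1 t1' b a) => //; first by rewrite eq_sym.
  suff pt (i : 'I_q) : (t1 i + (i == b) = t1 i - (i == a) + (i == b) + (i == a))%N.
    by apply/ffunP => i; rewrite !ffunE; exact: pt.
  by rewrite addnAC p1.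
apply: le_trans (dTV_tri n t1 t2 t1') _.
have := IH t1' hD' h1'.
rewrite -natr1 mulrDr mulr1; lra.
Qed.

End Top.


Unset Implicit Arguments.
Theorem lemma11 (R : realType) (q : nat) (U : 'M[R]_q) :
  (2 <= q)%N -> pos_stochastic U ->
  exists C : R, exists N : nat, forall n : nat, (N <= n)%N ->
    (forall (t1 t2 : {ffun 'I_q -> nat}) (a b : 'I_q),
        inN n t1 -> inN n t2 -> a != b ->
        addcomp t1 (evec a) = addcomp t2 (evec b) ->
        dTV n U t1 t2 <= bnd q n C)
    /\
    (forall (t1 t2 : {ffun 'I_q -> nat}),
        inN n t1 -> inN n t2 ->
        dTV n U t1 t2 <= bnd q n C * dc R t1 t2).
Proof.
move=> q2 [pos Usum].
have [mu [mu0 mu1 muU]] := ex_mu pos.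
set C := 2 / Num.sqrt (2 * mu).
exists C, 2%N => n n2.
have n0 : (0 < n)%N by apply: leq_trans n2.
have C0 : 0 <= C by rewrite /C divr_ge0 // sqrtr_ge0.
have hb : 2 / Num.sqrt (n%:R * (2 * mu)) <= bnd q n C.
  rewrite /bnd sqrtrM ?ler0n // invfM mulrA mulrC.
  rewrite -[X in X <= _]mul1r /C.
  set pw := _ `^ _.
  have snp : 0 < Num.sqrt (n%:R : R) by rewrite sqrtr_gt0 ltr0n.
  set s2 := Num.sqrt (2 * mu); set sn := Num.sqrt (n%:R : R).
  have -> : 1 * (s2^-1 * (2 / sn)) = (2 / s2 / sn) * 1 by ring.
  have -> : 2 / s2 * pw / sn = (2 / s2 / sn) * pw by ring.
  apply: ler_wpM2l; first by rewrite !divr_ge0 // sqrtr_ge0.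
  have l1 : 1 <= log2 (n%:R : R).
    have l2 : (0 : R) < ln 2 by apply: ln_gt0; lra.
    rewrite /log2 ler_pdivlMr // mul1r ler_ln.
    - by rewrite ler_nat.
    - by rewrite posrE; lra.
    - by rewrite posrE ltr0n.
  rewrite /pw -{1}(powRr0 (log2 (n%:R : R))); apply: (ler_powR l1).
  apply: divr_ge0 => //; rewrite subr_ge0 (ler_nat R 2 q); exact: q2.
have pi : forall (t1 t2 : {ffun 'I_q -> nat}) (a b : 'I_q),
    inN n t1 -> inN n t2 -> a != b ->
    addcomp t1 (evec a) = addcomp t2 (evec b) -> dTV n U t1 t2 <= bnd q n C.
  move=> t1 t2 a b h1 h2 ab e; apply: le_trans hb.
  exact: (part_i mu0 mu1 muU Usum n0 h1 h2 ab e).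
split => // t1 t2 h1 h2; rewrite (dc_Dn R h1 h2).
apply: (part_ii _ pi h2 erefl h1).
apply: le_trans hb; rewrite divr_ge0 // sqrtr_ge0.
Qed.
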